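(* Let $s$ be a positive integer, $\alpha_1,\dotsc,\alpha_d\in\mathbb{C}$, $z_1,\dotsc,z_d\in\mathbb{C}$, and $Q(z)=\sum_{j=1}^d\alpha_j(z-z_j)^{-s}$. Then for every $n\ge0$, $y=Q^{(n)}$ satisfies $$\sum_{i=0}^d\frac{e_i(z)}{(s+n)(s+n+1)\cdots(s+n+i-1)}\frac{\mathrm{d}^iy}{\mathrm{d}z^i}=0,$$ where $e_i(z)$ is the $i$-th elementary symmetric function of the $d$ quantities $z-z_1,\dotsc,z-z_d$, and $e_0=1$ (the empty product in the denominator for $i=0$ is $1$). *)

(* Defs.v *)
From HB Require Import structures.
From mathcomp Require Import all_boot all_order all_algebra.
From mathcomp Require Import complex.
From mathcomp Require Import all_classical all_reals all_analysis.
Set Implicit Arguments. Unset Strict Implicit. Unset Printing Implicit Defensive.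
Import Order.TTheory GRing.Theory Num.Theory.
Import numFieldNormedType.Exports.
Local Open Scope ring_scope.

Definition Qfun (R : realType) (d s : nat) (alpha zs : 'I_d -> R[i]) (z : R[i]) : R[i] :=
  \sum_(j < d) alpha j * (z - zs j) ^- s.

Definition esym_shift (R : realType) (d : nat) (zs : 'I_d -> R[i]) (i : nat) (z : R[i]) : R[i] :=
  \sum_(A : {set 'I_d} | #|A| == i) \prod_(j in A) (z - zs j).

Definition rising (R : realType) (m i : nat) : R[i] := \prod_(k < i) (m + k)%:R.

(* Main.v *)
Require Import Defs.
From HB Require Import structures.
From mathcomp Require Import all_boot all_order all_algebra.
From mathcomp Require Import complex.
From mathcomp Require Import all_classical all_reals all_analysis.
From mathcomp Require Import ring lra zify.
Import Order.TTheory GRing.Theory Num.Theory.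
Import numFieldNormedType.Exports.
Local Open Scope ring_scope.

Lemma is_derive_shiftN (R : realType) (a x : (R[i] : numFieldType)) :
  is_derive x 1 (fun y : (R[i] : numFieldType) => y - a) 1.
Proof.
have := @is_deriveB _ _ _ id (cst a) x 1 1 0 _ _.
rewrite subr0; apply.
Qed.

Lemma is_derive_pow (R : realType) (a x : (R[i] : numFieldType)) (m : nat) :
  is_derive x 1 (fun y : (R[i] : numFieldType) => (y - a)^+m) (m%:R * (x - a)^+m.-1).
Proof.
have := @is_deriveX _ _ (fun y : (R[i] : numFieldType) => y - a) m x 1 1 (is_derive_shiftN _ a x).
rewrite /GRing.scale /= mulr1 => H.
suff -> : (fun y : (R[i] : numFieldType) => (y - a)^+m) = (+%R^~ (- a)) ^+ m by [].
by apply/funext => y; rewrite exprfctE.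
Qed.

Lemma invpow_aux (R : realType) (A B : R[i]) (k : nat) : A != 0 -> B != 0 ->
  - (A * B)^-1 * (k%:R * A) = - k%:R / B.
Proof. by move=> *; field; apply/andP. Qed.

Lemma invpow_eq (R : realType) (w : R[i]) (m : nat) : w != 0 -> (0 < m)%N ->
  - ((w ^+ m) ^- 2) * (m%:R * w ^+ m.-1) = - m%:R * (w ^+ m.+1)^-1.
Proof.
move=> w0; case: m => // m _ /=.
have -> : (w ^+ m.+1) ^+ 2 = w ^+ m * w ^+ m.+2.
  by rewrite -exprM -exprD; congr (_ ^+ _); lia.
by rewrite (invpow_aux _ (w ^+ m) (w ^+ m.+2)) // expf_neq0.
Qed.

Lemma is_derive_invpow (R : realType) (a x : (R[i] : numFieldType)) (m : nat) :
  x != a -> (0 < m)%N ->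
  is_derive x 1 (fun y : (R[i] : numFieldType) => ((y - a)^+m)^-1) (- m%:R * ((x - a)^+m.+1)^-1).
Proof.
move=> xa m0.
have xa0 : x - a != 0 by rewrite subr_eq0.
have [d1 d2] := is_derive_pow _ a x m.
have fx0 : (x - a) ^+ m != 0 by rewrite expf_neq0.
apply: DeriveDef; first exact: derivableV.
by rewrite deriveV // d2 -invpow_eq.
Qed.


Set Implicit Arguments. Unset Strict Implicit.
Definition Pk (R : realType) (d s : nat) (alpha zs : 'I_d -> R[i]) (k : nat) (x : R[i]) : R[i] :=
  \sum_(j < d) alpha j * ((-1)^+k * rising R s k) * ((x - zs j)^+(s+k))^-1.

Lemma risingS (R : realType) m k : rising R m k.+1 = rising R m k * (m + k)%:R.
Proof. by rewrite /rising big_ord_recr. Qed.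

Lemma derivP (R : realType) (d s : nat) (alpha zs : 'I_d -> R[i]) (k : nat) (x : (R[i] : numFieldType)) :
  (0 < s)%N -> (forall j, x != zs j) ->
  is_derive x 1 (Pk s alpha zs k : (R[i] : numFieldType) -> (R[i] : numFieldType)) (Pk s alpha zs k.+1 x).
Proof.
move=> s0 xz.
pose h := fun j : 'I_d => (alpha j * ((-1)^+k * rising R s k)) \*:
   (fun y : (R[i] : numFieldType) => ((y - zs j)^+(s+k))^-1).
have -> : (Pk s alpha zs k : (R[i] : numFieldType) -> (R[i] : numFieldType)) = \sum_(j < d) h j.
  by apply/funext => y; rewrite fct_sumE.
rewrite /Pk; apply: is_derive_sum => j.
apply: is_derive_eq.
  apply: is_deriveZ; apply: is_derive_invpow => //; lia.
rewrite risingS addnS /GRing.scale /= [(-1)^+k.+1]exprS [_ ^+ (s+k).+1]exprS.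
ring.
Qed.

Lemma near_good (R : realType) (d : nat) (zs : 'I_d -> R[i]) (x : (R[i] : numFieldType)) :
  (forall j, x != zs j) -> \forall y \near x, forall j, y != zs j.
Proof.
move=> xz.
have H : forall j, \forall y \near x, y != zs j.
  move=> j; exists `|x - zs j|; first by rewrite /= normr_gt0 subr_eq0.
  move=> y /= hy; apply/eqP => yz; move: hy; by rewrite yz ltxx.
exact: filter_forall H.
Qed.

Lemma derQ (R : realType) (d s : nat) (alpha zs : 'I_d -> R[i]) (k : nat) (x : (R[i] : numFieldType)) :
  (0 < s)%N -> (forall j, x != zs j) ->
  @derive1n (R[i] : numFieldType) (R[i] : numFieldType) k (Qfun s alpha zs) x = Pk s alpha zs k x.
Proof.
move=> s0; elim: k x => [|k IH] x xz.
  rewrite /= /Qfun /Pk; apply: eq_bigr => j _; by rewrite expr0 /rising big_ord0 !mul1r addn0 mulr1.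
rewrite derive1nS derive1E.
rewrite (@near_eq_derive _ _ _ _ (Pk s alpha zs k : (R[i]:numFieldType) -> (R[i]:numFieldType))).
  by have [_ ->] := @derivP _ _ s alpha zs k x s0 xz.
near=> y; apply: IH; near: y; exact: near_good.
Unshelve. all: by end_near.
Qed.
Lemma term_id (R : rcfType) (e a r1 r2 w : R[i]) (s n i k : nat) : r2 != 0 -> w != 0 ->
 e / r2 * (a * ((-1)^+(i+n) * (r1*r2)) * (w^+(s + (i + n)))^-1)
 = a * ((-1)^+n * r1 * (-1)^+(i+k) * (w^+(s + n + (i+k)))^-1) * (e * (-w)^+((i+k) - i)).
Proof.
move=> r20 w0.
have E1 : (s + (i+n) = (s+n) + i)%N by lia.
have hw : (-w)^+k = ((-1)^+k)^-1 * w^+k by rewrite (exprNn w); congr (_ * _); rewrite -exprVn invrN1.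
have t0 : ((-1)^+k : R[i]) != 0 by rewrite expf_neq0 // oppr_eq0 oner_eq0.
have t1 : ((-1)^+i : R[i]) != 0 by rewrite expf_neq0 // oppr_eq0 oner_eq0.
have t2 : ((-1)^+n : R[i]) != 0 by rewrite expf_neq0 // oppr_eq0 oner_eq0.
have wk : w^+k != 0 by rewrite expf_neq0.
have wsn : w^+(s+n) != 0 by rewrite expf_neq0.
have wi : w^+i != 0 by rewrite expf_neq0.
rewrite E1 addKn hw ![(-1)^+(_ + _)]exprD ![w^+(s+n+_)]exprD [w^+(i+k)]exprD.
move: t0 t1 t2 wk wsn wi.
move: ((-1)^+k : R[i]) ((-1)^+i : R[i]) ((-1)^+n : R[i]) (w^+k) (w^+(s+n)) (w^+i) => A B C D E F t0 t1 t2 wk wsn wi.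
by field; rewrite t0 wk wi wsn r20.
Qed.
Lemma vieta (R : realType) d (zs : 'I_d -> R[i]) (z u : R[i]) :
  \sum_(i < d.+1) esym_shift zs i z * u ^+ (d - i) = \prod_(k < d) ((z - zs k) + u).
Proof.
rewrite bigA_distr.
have G (J : {set 'I_d}) : \prod_(k < d) (if k \in J then z - zs k else u) =
   \prod_(k in J) (z - zs k) * u ^+ (d - #|J|).
  rewrite (bigID (mem J)) /=; congr (_ * _).
    by apply: eq_bigr => k ->.
  rewrite (eq_bigr (fun _ => u)); last by move=> k /negbTE ->.
  rewrite prodr_const; congr (_ ^+ _).
  have E := cardC J; rewrite card_ord in E.
  rewrite -[X in (X - _)%N]E addKn.
  by apply: eq_card => k; rewrite !unfold_in.
under [RHS]eq_bigr do rewrite G.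
rewrite (partition_big (fun J : {set 'I_d} => (inord #|J| : 'I_d.+1)) xpredT) //=.
apply: eq_bigr => i _; rewrite /esym_shift mulr_suml.
apply: eq_big => J.
  have : (#|J| <= d)%N by have := max_card (mem J); rewrite card_ord.
  move=> hJ; apply/eqP/eqP => h.
    by apply: val_inj; rewrite /= inordK ?ltnS.
  by rewrite -h inordK ?ltnS.
by move=> /eqP ->.
Qed.

Lemma rising_split (R : realType) (s n i : nat) :
  rising R s (i + n) = rising R s n * rising R (s + n) i.
Proof.
elim: i => [|i IH]; first by rewrite add0n /rising big_ord0 mulr1.
rewrite addSn !risingS IH -mulrA; do 2 congr (_ * _); congr (_%:R); lia.
Qed.

Lemma rising_neq0 (R : realType) (m i : nat) : (0 < m)%N -> rising R m i != 0.
Proof.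
move=> m0; elim: i => [|i IH]; first by rewrite /rising big_ord0 oner_eq0.
by rewrite risingS mulf_neq0 // pnatr_eq0; lia.
Qed.

Theorem proposition5p2 (R : realType) (d s : nat) (alpha zs : 'I_d -> R[i]) :
  (0 < s)%N ->
  forall (n : nat) (z : R[i]), (forall j : 'I_d, z != zs j) ->
  let y : R[i] -> R[i] := @derive1n (R[i] : numFieldType) (R[i] : numFieldType) n (Qfun s alpha zs) in
  \sum_(i < d.+1)
     esym_shift zs i z / rising R (s + n) i
       * @derive1n (R[i] : numFieldType) (R[i] : numFieldType) i y z = 0.
Proof.
move=> s0 n z hz y.
have hy : forall i, @derive1n (R[i] : numFieldType) (R[i] : numFieldType) i y z
   = Pk s alpha zs (i + n) z.
  by move=> i; rewrite /y /derive1n -iterD; exact: (@derQ _ _ s alpha zs (i + n) z s0 hz).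
pose C := fun j : 'I_d => alpha j * ((-1)^+n * rising R s n * (-1)^+d * ((z - zs j)^+(s + n + d))^-1).
transitivity (\sum_(i < d.+1) \sum_(j < d) C j * (esym_shift zs i z * (-(z - zs j))^+(d - i))).
  apply: eq_bigr => i _; rewrite hy /Pk mulr_sumr; apply: eq_bigr => j _.
  have hi : (i + (d - i) = d)%N by have := ltn_ord i; lia.
  have w0 : z - zs j != 0 by rewrite subr_eq0.
  have r0 : rising R (s + n) i != 0 by apply: rising_neq0; lia.
  rewrite rising_split.
  have := @term_id R (esym_shift zs i z) (alpha j) (rising R s n) (rising R (s + n) i) (z - zs j) s n i (d - i)
     r0 w0.
  by rewrite hi /C => ->.
rewrite exchange_big /=; apply: big1 => j _; rewrite -mulr_sumr vieta.
by rewrite (bigD1 j) //= subrr mul0r mulr0.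
Qed.
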